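(* Let $n\ge4$ and consider $n$ agents with private types $t_i\in[0,\infty)$ and valuations $v_i(t_i,S)=|S|\cdot t_i$ for winning sets $S\ni i$ (and $0$ if $i\notin S$), and suppose the seller incurs a cost of $n$ for each copy of the good sold, so the seller's profit from winning set $S$ with prices $(p_i)_{i\in S}$ is $\sum_{i\in S}p_i-n|S|$. Then for every constant $L\ge1$ there is no universally truthful mechanism whose expected profit is at least $\frac1L\mathcal{F}^{(3)}_{\mathrm{cost}}(t)$ for every $t\in[0,\infty)^n$, where $\mathcal{F}^{(3)}_{\mathrm{cost}}(t)=\max\{(c-n)|S| : c\ge0,\ S\subseteq[n],\ |S|\ge3,\ v_i(t_i,S)\ge c\ \forall i\in S\}$. In particular, with a positive per-copy cost the competitive ratio can be unbounded.
   Context: A deterministic mechanism maps reported types to a winning set $S$ and prices $p_i$ for $i\in S$ (losers pay $0$); agent utility is $v_i(t_i,S)-p_i$ if $i\in S$, else $0$. It is truthful if reporting the true type maximizes every agent's utility for all fixed reports of the others, and individually rational if truthful agents get nonnegative utility. A universally truthful mechanism is a probability distribution over deterministic truthful, individually rational mechanisms. *)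

(* Defs.v *)
From HB Require Import structures.
From mathcomp Require Import all_boot all_order all_algebra.
From mathcomp Require Import all_classical all_reals all_analysis.
Set Implicit Arguments. Unset Strict Implicit. Unset Printing Implicit Defensive.
Import Order.TTheory GRing.Theory Num.Theory.
Local Open Scope ring_scope.
Local Open Scope classical_set_scope.

(* A deterministic mechanism for n agents: maps a reported type profile
   to a winning set S and prices p_i (only prices of winners matter;
   losers pay 0). *)
Record mechanism (n : nat) (R : Type) := Mechanism {
  alloc : ('I_n -> R) -> {set 'I_n};
  price : ('I_n -> R) -> 'I_n -> R }.

Section Defs.
Variables (R : realType) (n : nat).

Definition valuation (i : 'I_n) (ti : R) (S : {set 'I_n}) : R :=
  if i \in S then #|S|%:R * ti else 0.

Definition utility (M : mechanism n R) (i : 'I_n) (ti : R) (r : 'I_n -> R) : R :=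
  if i \in alloc M r then valuation i ti (alloc M r) - price M r i else 0.

Definition update (t : 'I_n -> R) (i : 'I_n) (x : R) : 'I_n -> R :=
  fun j => if j == i then x else t j.

Definition nonneg_profile (t : 'I_n -> R) := forall i, 0 <= t i.

Definition truthful (M : mechanism n R) : Prop :=
  forall t, nonneg_profile t -> forall (i : 'I_n) (x : R), 0 <= x ->
    utility M i (t i) (update t i x) <= utility M i (t i) t.

Definition indiv_rational (M : mechanism n R) : Prop :=
  forall t, nonneg_profile t -> forall i, 0 <= utility M i (t i) t.

Definition profit (M : mechanism n R) (t : 'I_n -> R) : R :=
  \sum_(i in alloc M t) price M t i - n%:R * #|alloc M t|%:R.

Definition Fcost3 (t : 'I_n -> R) : \bar R :=
  ereal_sup [set x : \bar R | exists (c : R) (S : {set 'I_n}),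
    [/\ 0 <= c, (3 <= #|S|)%N,
        (forall i, i \in S -> c <= valuation i (t i) S) &
        x = ((c - n%:R) * #|S|%:R)%:E]].

End Defs.

(* Main.v *)
Require Import Defs.
From HB Require Import structures.
From mathcomp Require Import all_boot all_order all_algebra.
From mathcomp Require Import all_classical all_reals all_analysis.
From mathcomp Require Import ring lra.
Import Order.TTheory GRing.Theory Num.Theory.
Local Open Scope ring_scope.
Local Open Scope classical_set_scope.

Section Det.
Variables (R : realType) (n : nat) (M : mechanism n R).
Hypotheses (Ht : truthful M) (Hir : indiv_rational M).

Lemma util_diff (i : 'I_n) (x y : R) r :
  utility M i y r - utility M i x r =
  (if i \in alloc M r then #|alloc M r|%:R else 0) * (y - x).
Proof.
rewrite /utility /valuation; case: (i \in alloc M r); last by rewrite subr0 mul0r.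
ring.
Qed.

Lemma util_all (i : 'I_n) x r : alloc M r = [set: 'I_n]%SET ->
  utility M i x r = n%:R * x - price M r i.
Proof.
move=> h; rewrite /utility /valuation h !inE cardsT card_ord.
by [].
Qed.
Lemma dummy : True. Proof. by [].
Qed.

Lemma step_all t (i : 'I_n) y : nonneg_profile t -> alloc M t = [set: 'I_n]%SET ->
  t i <= y -> alloc M (update t i y) = [set: 'I_n]%SET.
Proof.
move=> t0 hA hy.
have [e|ne] := eqVneq y (t i).
  have -> : update t i y = t.
    by apply/funext => j; rewrite /update; case: eqP => // ->; rewrite e.
  by [].
have hlt : t i < y by rewrite lt_neqAle eq_sym ne hy.
have t'0 : nonneg_profile (update t i y).
  move=> j; rewrite /update; case: eqP => _ //; exact: le_trans (t0 i) hy.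
have hupd : update (update t i y) i (t i) = t.
  by apply/funext => j; rewrite /update; case: eqP => // ->.
have h1 := Ht _ t'0 i (t i) (t0 i).
rewrite hupd {1}/update eqxx in h1.
have h2 := Ht _ t0 i y (le_trans (t0 i) hy).
have d1 := util_diff i (t i) y t.
have d2 := util_diff i (t i) y (update t i y).
rewrite hA !inE cardsT card_ord in d1.
have key : n%:R * (y - t i) <=
   (if i \in alloc M (update t i y) then #|alloc M (update t i y)|%:R else 0) * (y - t i).
  rewrite -d1 -d2.
  move: h1 h2; rewrite /update eqxx => h1 h2.
  have -> : (fun j => if j == i then y else t j) = update t i y by [].
  lra.
have yp : 0 < y - t i by rewrite subr_gt0.
rewrite ler_pM2r // in key.
case: ifP key => hin key.
  apply/eqP; rewrite eqEcard finset.subsetT cardsT card_ord -(ler_nat R); exact: key.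
exfalso; have n0 : (0 < n)%N := leq_ltn_trans (leq0n _) (ltn_ord i).
by move: key; rewrite leNgt ltr0n n0.
Qed.

Lemma up_all t t' : nonneg_profile t -> (forall i, t i <= t' i) ->
  alloc M t = [set: 'I_n]%SET -> alloc M t' = [set: 'I_n]%SET.
Proof.
move=> t0 le hA.
pose mix k := fun i : 'I_n => if (i < k)%N then t' i else t i.
have m0 k : nonneg_profile (mix k).
  by move=> i; rewrite /mix; case: ifP => _ //; exact: le_trans (t0 i) (le i).
have : forall k, alloc M (mix k) = [set: 'I_n]%SET.
  elim=> [|k IH].
    have -> : mix 0%N = t by apply/funext=> i; rewrite /mix ltn0.
    by [].
  case: (ltnP k n) => hk.
    have -> : mix k.+1 = update (mix k) (Ordinal hk) (t' (Ordinal hk)).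
      apply/funext => i; rewrite /mix /update.
      case: (eqVneq i (Ordinal hk)) => [->|ne] /=; first by rewrite ltnS leqnn.
      have nk : val i != k by apply: contra ne => /eqP h; apply/eqP/val_inj.
      by rewrite ltnS leq_eqVlt (negbTE nk).
    apply: step_all => //; rewrite /mix /= ltnn; exact: le.
  have -> : mix k.+1 = mix k; last by [].
  apply/funext => i; rewrite /mix.
  have h1 : (i < k)%N := leq_trans (ltn_ord i) hk.
  have h2 : (i < k.+1)%N by rewrite ltnS ltnW.
  by rewrite h1 h2.
move/(_ n).
have -> : mix n = t' by apply/funext=> i; rewrite /mix ltn_ord.
by [].
Qed.

Lemma profit_notall t : (0 < n)%N ->
  (forall i, 0 <= t i <= 1 + n%:R^-1) ->
  alloc M t != [set: 'I_n]%SET -> profit M t <= 0.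
Proof.
move=> n0 tb hne.
set S := alloc M t.
have t0 : nonneg_profile t by move=> i; case/andP: (tb i).
have hk : (#|S| < n)%N.
  rewrite ltn_neqAle; apply/andP; split; last by have := max_card (mem S); rewrite card_ord.
  apply/negP => /eqP hk; move/negP: hne; apply.
  by rewrite eqEcard finset.subsetT cardsT card_ord hk leqnn.
have hp : forall i, i \in S -> price M t i <= #|S|%:R * (1 + n%:R^-1).
  move=> i hi; have := Hir _ t0 i; rewrite /utility /valuation -/S hi => h.
  case/andP: (tb i) => _ hti.
  have : #|S|%:R * t i <= #|S|%:R * (1 + n%:R^-1) by rewrite ler_wpM2l.
  lra.
rewrite /profit -/S.
have hs : \sum_(i in S) price M t i <= \sum_(i in S) (#|S|%:R * (1 + n%:R^-1)) by apply: ler_sum.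
rewrite sumr_const in hs.
set k := #|S| in hk hs *.
have nR : 0 < n%:R :> R by rewrite ltr0n.
have na : n%:R * n%:R^-1 = 1 :> R by rewrite mulfV // gt_eqF.
have kn : k%:R + 1 <= n%:R :> R by rewrite natr1 ler_nat.
have k0 : 0 <= k%:R :> R by [].
have ka : k%:R * n%:R^-1 <= 1 :> R.
  by rewrite ler_pdivrMr // mul1r ler_nat ltnW.
rewrite -mulr_natr in hs.
have : k%:R * (k%:R + k%:R * n%:R^-1 - n%:R) <= 0 :> R.
  apply: mulr_ge0_le0 => //; lra.
nra.
Qed.

Lemma price_bound t z i : nonneg_profile t -> nonneg_profile z ->
  alloc M t = [set: 'I_n]%SET -> alloc M z = [set: 'I_n]%SET ->
  z = update t i (z i) -> price M t i <= n%:R * z i.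
Proof.
move=> t0 z0 hA hZ hz.
have h1 := Ht _ t0 i (z i) (z0 i).
rewrite -hz !util_all // in h1.
have h2 := Hir _ z0 i.
rewrite util_all // in h2.
lra.
Qed.

End Det.

Definition ee (R : realType) (n j : nat) : R := ((2%:R ^+ j) * n%:R)^-1.
Definition dd (R : realType) (n j : nat) : 'I_n -> R := fun _ => 1 + ee R n j.

Section Diag.
Variables (R : realType) (n : nat) (n0 : (0 < n)%N).

Lemma nR_gt0 : 0 < n%:R :> R. Proof. by rewrite ltr0n. Qed.
Lemma p2_gt0 j : 0 < 2%:R ^+ j :> R. Proof. by rewrite exprn_gt0 // ltr0n. Qed.

Lemma ee_gt0 j : 0 < ee R n j.
Proof. by rewrite /ee invr_gt0 mulr_gt0 ?p2_gt0 ?nR_gt0. Qed.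

Lemma ee_anti j m : (j <= m)%N -> ee R n m <= ee R n j.
Proof.
move=> hjm; rewrite /ee lef_pV2 ?posrE ?mulr_gt0 ?p2_gt0 ?nR_gt0 //.
rewrite ler_pM2r ?nR_gt0 //; apply: ler_weXn2l => //.
by rewrite ler1n.
Qed.

Lemma ee_le j : ee R n j <= n%:R^-1.
Proof.
have := @ee_anti 0%N j (leq0n j); rewrite /ee expr0 mul1r //.
Qed.

Lemma dd_nonneg j : nonneg_profile (dd R n j).
Proof. move=> i; rewrite /dd; have := ee_gt0 j; lra. Qed.

Variable (M : mechanism n R).
Hypotheses (Ht : truthful M) (Hir : indiv_rational M).

Lemma profit_diag j m : (j <= m)%N -> alloc M (dd R n j) = [set: 'I_n]%SET ->
  alloc M (dd R n m) = [set: 'I_n]%SET ->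
  profit M (dd R n j) <= n%:R * n%:R * ee R n m.
Proof.
move=> hjm hAj hAm.
have hp : forall i, price M (dd R n j) i <= n%:R * (1 + ee R n m).
  move=> i.
  have hz : alloc M (update (dd R n j) i (1 + ee R n m)) = [set: 'I_n]%SET.
    apply: (@up_all R n M Ht _ _ (dd_nonneg m)) => //.
    move=> k; rewrite /update /dd; case: eqP => _ //.
    by rewrite lerD2l ee_anti.
  have hzi : update (dd R n j) i (1 + ee R n m) i = 1 + ee R n m.
    by rewrite /update eqxx.
  have z0 : nonneg_profile (update (dd R n j) i (1 + ee R n m)).
    move=> k; rewrite /update; case: (k == i); last exact: dd_nonneg.
    have := ee_gt0 m; lra.
  have := @price_bound R n M Ht Hir _ _ i (dd_nonneg j) z0 hAj hz.
  rewrite hzi; apply.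
  by [].
rewrite /profit hAj cardsT card_ord.
have hs : \sum_(i in [set: 'I_n]%SET) price M (dd R n j) i <=
   \sum_(i in [set: 'I_n]%SET) (n%:R * (1 + ee R n m)) by apply: ler_sum.
rewrite sumr_const cardsT card_ord -mulr_natr in hs.
have -> : n%:R * n%:R * ee R n m = n%:R * (1 + ee R n m) * n%:R - n%:R * n%:R by ring.
move: hs; clear hAj hAm hp; lra.
Qed.

Lemma geo N : \sum_(j < N) (2%:R ^+ j : R) = 2%:R ^+ N - 1.
Proof.
elim: N => [|N IH]; first by rewrite big_ord0 expr0 subrr.
by rewrite big_ord_recr /= IH exprS; ring.
Qed.

Lemma diag_sum N :
  \sum_(j < N) 2%:R ^+ j * Num.max (profit M (dd R n j)) 0 <= 2 * n%:R.
Proof.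
have n2 : 0 <= 2 * n%:R :> R by rewrite mulr_ge0 // ler0n.
elim: N => [|m IH]; first by rewrite big_ord0.
case: (boolP (alloc M (dd R n m) == [set: 'I_n]%SET)) => hm.
  have b : forall j : 'I_m.+1,
      Num.max (profit M (dd R n j)) 0 <= n%:R * n%:R * ee R n m.
    move=> j; have hj : (j <= m)%N by rewrite -ltnS ltn_ord.
    have c0 : 0 <= n%:R * n%:R * ee R n m by rewrite !mulr_ge0 ?ler0n ?ltW ?ee_gt0.
    rewrite ge_max c0 andbT.
    case: (boolP (alloc M (dd R n j) == [set: 'I_n]%SET)) => hj'.
      exact: profit_diag hj (eqP hj') (eqP hm).
    apply: le_trans c0; apply: (@profit_notall R n M Hir _ n0) => // i.
    rewrite /dd; have := ee_gt0 j; have := ee_le j; lra.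
  apply: (@le_trans _ _ (\sum_(j < m.+1) 2%:R ^+ j * (n%:R * n%:R * ee R n m))).
    apply: ler_sum => j _; apply: ler_wpM2l; [exact: ltW (p2_gt0 _) | exact: b].
  rewrite -mulr_suml geo.
  have e : 2%:R ^+ m.+1 * (n%:R * n%:R * ee R n m) = 2 * n%:R :> R.
    rewrite /ee exprS; field.
    by rewrite !gt_eqF ?p2_gt0 ?nR_gt0.
  have : 0 <= n%:R * n%:R * ee R n m by rewrite !mulr_ge0 ?ler0n ?ltW ?ee_gt0.
  move: e; set a := 2%:R ^+ m.+1; set c := n%:R * n%:R * ee R n m => e c0.
  have -> : (a - 1) * c = a * c - c by ring.
  lra.
rewrite big_ord_recr /=.
have -> : Num.max (profit M (dd R n m)) 0 = 0.
  apply/max_idPr; apply: (@profit_notall R n M Hir _ n0) => // i.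
  rewrite /dd; have := ee_gt0 m; have := ee_le m; lra.
by rewrite mulr0 addr0.
Qed.

End Diag.

Lemma Fcost3_diag (R : realType) (n : nat) (hn : (4 <= n)%N) j :
  ((n%:R * n%:R * ee R n j)%:E <= Fcost3 (dd R n j))%E.
Proof.
apply: ereal_sup_ubound; exists (n%:R * (1 + ee R n j)), [set: 'I_n]%SET.
have n0 : (0 < n)%N by apply: leq_trans hn.
split.
- by rewrite mulr_ge0 ?ler0n // addr_ge0 // ltW // ee_gt0.
- by rewrite cardsT card_ord; apply: leq_trans hn.
- by move=> i _; rewrite /valuation /dd inE cardsT card_ord.
- by rewrite cardsT card_ord; congr (_%:E); ring.
Qed.

Theorem claim2 (R : realType) (n : nat) (hn : (4 <= n)%N) (L : R) (hL : 1 <= L)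
  (d : measure_display) (Omega : measurableType d) (P : probability Omega R)
  (M : Omega -> mechanism n R) :
  (forall w, truthful (M w) /\ indiv_rational (M w)) ->
  (forall t : 'I_n -> R, measurable_fun setT (fun w => profit (M w) t)) ->
  ~ (forall t : 'I_n -> R, nonneg_profile t ->
       ((L^-1)%:E * Fcost3 t <= \int[P]_(w in setT) (profit (M w) t)%:E)%E).
Proof.
move=> Hmech Hmeas H.
have n0 : (0 < n)%N by apply: leq_trans hn.
have L0 : 0 < L by apply: lt_le_trans hL; rewrite ltr01.
pose f (j : nat) (w : Omega) := Num.max (profit (M w) (dd R n j)) 0.
have fm j : measurable_fun setT (f j).
  rewrite /f; exact: (measurable_realfun.measurable_maxr (Hmeas _) (measurable_cst _)).
have f0 j w : 0 <= f j w by rewrite /f le_max lexx orbT.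
have low j : ((n%:R / L)%:E <= \int[P]_(w in setT) ((2%:R ^+ j * f j w)%:E))%E.
  have H1 := H (dd R n j) (@dd_nonneg R n n0 j).
  have H2 : ((L^-1 * (n%:R * n%:R * ee R n j))%:E
             <= \int[P]_(w in setT) (profit (M w) (dd R n j))%:E)%E.
    apply: le_trans H1; rewrite EFinM; apply: lee_wpmul2l.
      by rewrite lee_fin invr_ge0 ltW.
    exact: Fcost3_diag.
  have H3 : (\int[P]_(w in setT) (profit (M w) (dd R n j))%:E
             <= \int[P]_(w in setT) (f j w)%:E)%E.
    rewrite integralE.
    have -> : (\int[P]_(w in setT) (fun w => (profit (M w) (dd R n j))%:E)^\+ w
               = \int[P]_(w in setT) (f j w)%:E)%E.
      by apply: eq_integral => w _; rewrite funeposE /f EFin_max.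
    rewrite -[X in (_ <= X)%E]sube0; apply: leeB => //.
    by apply: integral_ge0 => w _; exact: funeneg_ge0.
  under eq_integral do rewrite EFinM.
  rewrite ge0_integralZl_EFin //; last first.
    exact/measurable_realfun.measurable_EFinP.
    by move=> w _; rewrite lee_fin.
  have -> : n%:R / L = 2%:R ^+ j * (L^-1 * (n%:R * n%:R * ee R n j)).
    rewrite /ee; field.
    by rewrite !gt_eqF ?p2_gt0 ?nR_gt0 ?L0.
  rewrite EFinM; apply: lee_wpmul2l; first by rewrite lee_fin ltW ?p2_gt0.
  exact: le_trans H2 H3.
set N := (Num.trunc (2 * L)).+1.
have hN : 2 * L < N%:R by exact: truncnS_gt.
have S1 : (\sum_(j < N) (n%:R / L)%:E
           <= \sum_(j < N) \int[P]_(w in setT) ((2%:R ^+ j * f j w)%:E))%E.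
  by apply: lee_sum => j _; exact: low.
rewrite -ge0_integral_sum // in S1; last 2 first.
- move=> j; apply/measurable_realfun.measurable_EFinP; apply: measurable_realfun.measurable_funM => //.
- by move=> j w _; rewrite lee_fin mulr_ge0 // ltW ?p2_gt0.
have S2 : (\int[P]_(w in setT) (\sum_(j < N) (2%:R ^+ j * f j w)%:E)
           <= \int[P]_(w in setT) (cst (2 * n%:R)%:E w))%E.
  apply: ge0_le_integral => //.
  - by move=> w _; apply: sume_ge0 => j _; rewrite lee_fin mulr_ge0 // ltW ?p2_gt0.
  - apply: emeasurable_sum => j; apply/measurable_realfun.measurable_EFinP.
    apply: measurable_realfun.measurable_funM => //.
  - move=> w _; rewrite sumEFin lee_fin.
    have [Ht Hir] := Hmech w.
    exact: (@diag_sum R n n0 (M w) Ht Hir N).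
rewrite integral_cst // in S2.
move: S2; set PT := (X in ((_ * X)%E)) => S2.
have hP : PT = 1%E by rewrite /PT; apply: probability_setT.
rewrite hP mule1 in S2.
have := le_trans S1 S2.
rewrite sumEFin sumr_const card_ord lee_fin -(mulr_natr (n%:R / L) N) => h.
move: hN h; set k := N%:R => hN h.
have nR : 0 < n%:R :> R by rewrite ltr0n.
have : n%:R * k <= 2 * n%:R * L.
  by rewrite -ler_pdivrMr // mulrAC.
clear -nR hN; nra.
Qed.
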